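(* An $r$-partite partition $\boldsymbol{\lambda}=(\lambda^0\mid\lambda^1\mid\cdots\mid\lambda^{r-1})$ of size $n$ is the cycle type of a square element of $G(r,1,n)$ (i.e. an element of the form $\pi^2$ with $\pi\in G(r,1,n)$) if and only if: (1) each even part in each partition $\lambda^t$ has even multiplicity; and (2) when $r$ is even, the odd parts of $\lambda^1,\lambda^3,\dots,\lambda^{r-1}$ have even multiplicity.
   Context: Let $\mathbb{Z}_r=\{\overline0,\dots,\overline{r-1}\}$. The generalized symmetric group is $G(r,1,n)=\{(z_1,\dots,z_n;\sigma): z_i\in\mathbb{Z}_r,\sigma\in S_n\}$ with product $(z_1,\dots,z_n;\sigma)(z'_1,\dots,z'_n;\sigma')=(z_1+z'_{\sigma^{-1}(1)},\dots,z_n+z'_{\sigma^{-1}(n)};\sigma\sigma')$. For $\pi=(z_1,\dots,z_n;\sigma)$ and a cycle $(u_1,\dots,u_\ell)$ of $\sigma$, its color is $z_{u_1}+\cdots+z_{u_\ell}\in\mathbb{Z}_r$. The cycle type of $\pi$ is the $r$-partite partition $(\lambda^0\mid\cdots\mid\lambda^{r-1})$ where $\lambda^j$ is the partition of the lengths of the cycles of $\sigma$ of color $j$; the sizes sum to $n$. Two elements are conjugate iff they have the same cycle type. *)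

(* Defs.v *)
From mathcomp Require Import all_boot all_order all_fingroup.
Set Implicit Arguments. Unset Strict Implicit. Unset Printing Implicit Defensive.
Import GroupScope.

(* Elements of G(r,1,n): (z_1,...,z_n; sigma), z_i in Z_r = 'I_r, sigma in S_n. *)
Definition gelt (r n : nat) := ({ffun 'I_n -> 'I_r} * {perm 'I_n})%type.

(* addition in Z_r (values in 'I_r, reduced mod r; r > 0 whenever 'I_r is inhabited) *)
Definition addZr (r : nat) (a b : 'I_r) : 'I_r := insubd a ((a + b) %% r)%N.

(* (z;s)(z';s') = (z_1 + z'_{s^-1(1)}, ..., z_n + z'_{s^-1(n)}; s s'),
   where s s' is the composite "s after s'"; in mathcomp (s' * s) x = s (s' x). *)
Definition gmul (r n : nat) (p q : gelt r n) : gelt r n :=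
  ([ffun i => addZr (p.1 i) (q.1 ((p.2)^-1 i))], q.2 * p.2).

Definition cycle_color (r n : nat) (p : gelt r n) (C : {set 'I_n}) : nat :=
  ((\sum_(u in C) (p.1 u : nat)) %% r)%N.

Definition cycle_mult (r n : nat) (p : gelt r n) (t : 'I_r) (l : nat) : nat :=
  #|[set C in porbits p.2 | (#|C| == l) && (cycle_color p C == t)]|.

Definition is_rpartition (r n : nat) (lam : 'I_r -> seq nat) : Prop :=
  (forall t, sorted geq (lam t) && all (fun x => 0 < x)%N (lam t)) /\
  (\sum_(t < r) sumn (lam t))%N = n.

Definition has_cycle_type (r n : nat) (p : gelt r n) (lam : 'I_r -> seq nat) : Prop :=
  forall (t : 'I_r) (l : nat), count_mem l (lam t) = cycle_mult p t l.

(* Main.v *)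
Require Import Defs.
From mathcomp Require Import all_boot all_order all_fingroup zify.
Set Implicit Arguments. Unset Strict Implicit. Unset Printing Implicit Defensive.

Lemma even_invol (T : finType) (S : {set T}) (f : T -> T) :
  (forall x, x \in S -> f x \in S) -> (forall x, x \in S -> f (f x) = x) ->
  (forall x, x \in S -> f x != x) -> ~~ odd #|S|.
Proof.
have [m] := ubnP #|S|; elim: m S => // m IH S; rewrite ltnS => leS h1 h2 h3.
have [->|[x xS]] := set_0Vmem S; first by rewrite cards0.
have fxS : f x \in S :\ x by rewrite !inE h1 // andbT h3.
pose S' := S :\ x :\ f x.
have cS : #|S| = #|S'|.+2.
  by rewrite (cardsD1 x S) xS (cardsD1 (f x)) fxS.
have HS' : forall y, y \in S' -> [/\ y \in S, y != x & y != f x].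
  by move=> y; rewrite !inE => /and3P[-> -> ->].
rewrite cS /= negbK; apply: IH.
- by move: leS; rewrite cS => /ltnW.
- move=> y /HS' [yS yx yfx]; rewrite !inE h1 // andbT.
  apply/andP; split.
    by apply: contra yx => /eqP /(congr1 f); rewrite h2 // h2 // => ->.
  by apply: contra yfx => /eqP <-; rewrite h2.
- by move=> y /HS' [yS _ _]; apply: h2.
- by move=> y /HS' [yS _ _]; apply: h3.
Qed.

Section Sq.
Variables (T : finType) (s : {perm T}).
Local Notation tau := (s * s)%g.
Local Notation P := (porbit tau).

Lemma porbit_s x : s @: P x = P (s x).
Proof.
have cm i : commute s (tau ^+ i)%g by apply: commuteX; rewrite /commute mulgA.
apply/setP => y; apply/imsetP/porbitP.
  case=> u /porbitP [i ->] ->; exists i.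
  by rewrite -!permM (cm i).
case=> i ->; exists ((tau ^+ i)%g x); first exact: mem_porbit.
by rewrite -!permM (cm i).
Qed.

Lemma porbit_tau x : P (tau x) = P x.
Proof. by have := porbit_perm tau 1 x; rewrite expg1. Qed.

Lemma porbit_sV x : P (s^-1 x)%g = P (s x).
Proof. by rewrite -{2}(permKV s x) -permM porbit_tau. Qed.

Lemma porbit_ss x : s @: (s @: P x) = P x.
Proof. by rewrite !porbit_s -permM porbit_tau. Qed.

Lemma iter_mod x a : (s ^+ a)%g x = (s ^+ (a %% #|porbit s x|))%g x.
Proof.
rewrite {1}(divn_eq a #|porbit s x|) expgD permM; congr (_ _).
by rewrite mulnC expgM permX iter_fix // permX iter_porbit.
Qed.

Lemma fixed_odd x : s @: P x = P x -> odd #|P x| /\ P x = porbit s x.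
Proof.
rewrite porbit_s => E.
have e2 : tau = (s ^+ 2)%g by rewrite expgS expg1.
have EP : P x = porbit s x.
  apply/setP => y; apply/idP/idP.
    by case/porbitP => i ->; rewrite e2 -expgM mem_porbit.
  case/porbitP => j ->; elim: j => [|j IHj]; first by rewrite expg0 perm1 porbit_id.
  by rewrite expgSr permM -E -porbit_s; apply: imset_f.
split=> //; rewrite EP.
have : s x \in P x by rewrite -E porbit_id.
case/porbitP => i; rewrite e2 -expgM.
rewrite -{1}(expg1 s) (iter_mod x 1) (iter_mod x (2 * i)).
set m := #|porbit s x|.
have m0 : 0 < m by rewrite lt0n card_porbit_neq0.
case: (ltnP 1 m) => [m1|]; last by case: m m0 => [|[]].
rewrite !permX => E2.
have U := uniq_traject_porbit s x.
have := nth_uniq x (i := 1 %% m) (j := 2 * i %% m) _ _ U.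
rewrite !size_traject !ltn_mod m0 => /(_ isT isT).
rewrite !nth_traject ?ltn_mod // E2 eqxx => /esym /eqP e.
apply: contraLR isT => /negbTE om.
by move: (congr1 odd e); rewrite odd_mod // odd_mod // oddM.
Qed.

End Sq.

Lemma val_addZr r (a b : 'I_r) : val (addZr a b) = (a + b) %% r.
Proof.
have r0 : 0 < r by apply: leq_ltn_trans (ltn_ord a).
by rewrite /addZr val_insubd ltn_pmod.
Qed.

Definition Zs r n (pi : gelt r n) (C : {set 'I_n}) := (\sum_(u in C) (pi.1 u : nat))%N.

Lemma colorK r n (pi : gelt r n) x :
  cycle_color (gmul pi pi) (porbit (pi.2 * pi.2)%g x) =
  (Zs pi (porbit (pi.2 * pi.2)%g x) + Zs pi (porbit (pi.2 * pi.2)%g (pi.2 x))) %% r.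
Proof.
rewrite /cycle_color /Zs /gmul /=.
under eq_bigr => u _ do rewrite ffunE val_addZr.
rewrite modn_summ big_split /=; congr ((_ + _) %% r).
rewrite -[in LHS](permKV pi.2 x) -porbit_s big_imset /=; last by move=> ? ? _ _; apply: perm_inj.
under eq_bigr => u _ do rewrite permK.
by rewrite porbit_sV.
Qed.

Lemma nec r n (pi : gelt r n) (t : 'I_r) l : (~~ odd l \/ (~~ odd r /\ odd t)) ->
  ~~ odd (cycle_mult (gmul pi pi) t l).
Proof.
move=> hyp; rewrite /cycle_mult /=.
set s := pi.2.
pose S := [set C in porbits (s * s)%g | (#|C| == l) && (cycle_color (gmul pi pi) C == t)]. change (~~ odd #|S|). apply: (@even_invol _ S (fun C => s @: C)) => C; rewrite /S;
  rewrite !inE => /andP [/imsetP [x _ ->] /andP [/eqP hl /eqP hc]].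
- rewrite card_imset; last exact: perm_inj.
  rewrite hl eqxx porbit_s imset_f //=.
  move: hc; rewrite !colorK -permM porbit_tau addnC => ->; exact: eqxx.
- exact: porbit_ss.
- apply/negP => /eqP E; have [od EP] := fixed_odd E.
  case: hyp => [|[er ot]]; first by rewrite -hl od.
  move: ot; rewrite -hc colorK -porbit_s E addnn odd_mod ?odd_double //.
  exact/negbTE.
Qed.

Definition item := (bool * nat * nat)%type.
Definition ipr (it : item) := it.1.1.
Definition ilen (it : item) := if it.1.1 then it.1.2.+1 else (it.1.2).*2.+1.
Definition ic (it : item) := it.2.
Definition isz (it : item) := if ipr it then ilen it + ilen it else ilen it.

Definition ltau (it : item) j :=
  if j < ilen it then j.+1 %% ilen it else ilen it + (j - ilen it).+1 %% ilen it.
Definition lsig (it : item) j :=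
  if ipr it then (if j < ilen it then ilen it + j else (j - ilen it).+1 %% ilen it)
  else (j + (it.1.2).+1) %% ilen it.
Definition liter i (it : item) j :=
  if j < ilen it then (j + i) %% ilen it else ilen it + (j - ilen it + i) %% ilen it.
Definition lkey (it : item) j := if j < ilen it then 0 else ilen it.
Definition lz (it : item) j := if j == 0 then ic it else 0.
Definition lmass (it : item) j := if j < ilen it then ic it else 0.
Definition lcolor (it : item) := if ipr it then ic it else ic it + ic it.

Lemma ilen_gt0 it : 0 < ilen it.
Proof. by rewrite /ilen; case: ifP. Qed.

Lemma single_lt it j : ~~ ipr it -> j < isz it -> j < ilen it.
Proof. by rewrite /isz => /negbTE ->. Qed.

Lemma ltau_lt it j : j < isz it -> ltau it j < isz it.
Proof.
have L0 := ilen_gt0 it; rewrite /ltau /isz.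
have := ltn_pmod (j.+1) L0; have := ltn_pmod (j - ilen it).+1 L0.
case: (ipr it); case: ifP => *; lia.
Qed.

Lemma lsig_lt it j : j < isz it -> lsig it j < isz it.
Proof.
have L0 := ilen_gt0 it; rewrite /lsig /isz.
have := ltn_pmod (j + (it.1.2).+1) L0; have := ltn_pmod (j - ilen it).+1 L0.
case: (ipr it); [case: ifP => *; lia | move=> *; lia].
Qed.

Lemma liter_lt i it j : j < isz it -> liter i it j < isz it.
Proof.
have L0 := ilen_gt0 it; rewrite /liter /isz.
have := ltn_pmod (j + i) L0; have := ltn_pmod (j - ilen it + i) L0.
case: (ipr it); case: ifP => *; lia.
Qed.

Lemma lkey_lt it j : j < isz it -> lkey it j < isz it.
Proof.
have L0 := ilen_gt0 it; rewrite /lkey /isz.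
case: (ipr it); case: ifP => *; lia.
Qed.

Lemma lsigK it j : j < isz it -> lsig it (lsig it j) = ltau it j.
Proof.
case: it => [[[] k] c]; rewrite /lsig /ltau /isz /ilen /ipr /= => hj.
  case: (ltnP j k.+1) => h.
    have -> : (k.+1 + j < k.+1) = false by lia.
    by rewrite addKn.
  have h2 : (j - k.+1).+1 %% k.+1 < k.+1 by apply: ltn_pmod.
  by rewrite (ifT _ _ h2).
rewrite modnDml.
have -> : j + k.+1 + k.+1 = j.+1 + k.*2.+1 by lia.
by rewrite modnDr hj.
Qed.

Lemma ltau_liter it j : ltau it j = liter 1 it j.
Proof. by rewrite /ltau /liter !addn1. Qed.

Lemma liter_add a b it j : liter a it (liter b it j) = liter (b + a) it j.
Proof.
have L0 := ilen_gt0 it; rewrite /liter.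
case: (ltnP j (ilen it)) => h.
  by rewrite (ltn_pmod _ L0) modnDml addnA.
rewrite ifF; last by rewrite ltnNge leq_addr.
by rewrite addKn modnDml addnA.
Qed.

Lemma liter_L it j : j < isz it -> liter (ilen it) it j = j.
Proof.
have L0 := ilen_gt0 it; rewrite /liter /isz.
case: (ltnP j (ilen it)) => h hj; first by rewrite modnDr (modn_small h).
have h1 : j - ilen it < ilen it by move: hj h; case: (ipr it) => /= *; lia.
by rewrite modnDr modn_small // subnKC //; lia.
Qed.

Lemma liter0 it j : j < isz it -> liter 0 it j = j.
Proof.
have L0 := ilen_gt0 it; rewrite /liter /isz.
case: (ltnP j (ilen it)) => h hj; first by rewrite addn0 (modn_small h).
have h1 : j - ilen it < ilen it by move: hj h; case: (ipr it) => /= *; lia.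
by rewrite addn0 modn_small // subnKC.
Qed.

Lemma ltau_inj it j j' : j < isz it -> j' < isz it -> ltau it j = ltau it j' -> j = j'.
Proof.
move=> hj hj' /(congr1 (liter (ilen it).-1 it)).
rewrite !ltau_liter !liter_add add1n prednK ?ilen_gt0 //.
by rewrite !liter_L.
Qed.

Lemma off_lt it j : j < isz it -> ilen it <= j -> j - ilen it < ilen it.
Proof. by rewrite /isz; case: (ipr it) => /= *; lia. Qed.

Lemma lkey_orbit it j j' : j < isz it -> j' < isz it ->
  (exists i, j' = liter i it j) <-> lkey it j' = lkey it j.
Proof.
have L0 := ilen_gt0 it; move=> hj hj'; rewrite /lkey /liter.
case: (ltnP j (ilen it)) => h; split.
- by case=> i ->; rewrite (ltn_pmod _ L0).
- case: (ltnP j' (ilen it)) => h' e; last by move: e; lia.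
  exists (ilen it - j + j').
  rewrite addnA subnKC ?(ltnW h) //.
  by rewrite (addnC (ilen it) j') modnDr (modn_small h').
- case=> i ->; rewrite ifF //; lia.
- case: (ltnP j' (ilen it)) => h' e; first by move: e; lia.
  have o1 := off_lt hj h; have o2 := off_lt hj' h'.
  exists (ilen it - (j - ilen it) + (j' - ilen it)).
  rewrite addnA subnKC ?(ltnW o1) //.
  by rewrite (addnC (ilen it) (j' - ilen it)) modnDr (modn_small o2) subnKC.
Qed.

Lemma lblock_sum it j (F : nat -> nat) : j < isz it ->
  \sum_(j' <- iota 0 (isz it) | lkey it j' == lkey it j) F j' =
  \sum_(j' <- iota (lkey it j) (ilen it)) F j'.
Proof.
have L0 := ilen_gt0 it; rewrite /isz /lkey.
have A : \sum_(j' <- iota 0 (ilen it) | (if j' < ilen it then 0 else ilen it) == ilen it) F j' = 0.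
  rewrite big_seq_cond big1 // => x /andP [].
  by rewrite mem_iota /= add0n => ->; rewrite eq_sym; case: (ilen it) L0.
have B : \sum_(j' <- iota 0 (ilen it) | (if j' < ilen it then 0 else ilen it) == 0) F j' =
         \sum_(j' <- iota 0 (ilen it)) F j'.
  rewrite big_seq_cond [RHS]big_seq; apply: eq_bigl => x.
  by rewrite mem_iota /= add0n; case: (x < ilen it) => //=; rewrite andbT; case: (ilen it) L0.
have C c : \sum_(j' <- iota (ilen it) (ilen it) | (if j' < ilen it then 0 else ilen it) == c) F j' =
         if c == ilen it then \sum_(j' <- iota (ilen it) (ilen it)) F j' else 0.
  rewrite big_seq_cond; case: eqP => [->|ne].
    rewrite [RHS]big_seq; apply: eq_bigl => x.
    by rewrite mem_iota; case: (ltnP x (ilen it)) => hx /=; rewrite ?eqxx ?andbT.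
  rewrite big1 // => x /andP []; rewrite mem_iota => /andP [hx _]; rewrite ltnNge hx /=.
  by move/eqP => e; case: ne.
case: (ipr it) => /=; last first.
  by move=> hj; rewrite hj B.
move=> hj; rewrite iotaD big_cat /= add0n C.
case: (ltnP j (ilen it)) => h.
  by rewrite B eq_sym eqn0Ngt L0 /= addn0.
by rewrite A eqxx add0n.
Qed.

Lemma lz_block it j : j < isz it ->
  \sum_(j' <- iota (lkey it j) (ilen it)) lz it j' = lmass it j.
Proof.
have L0 := ilen_gt0 it; rewrite /lkey /lmass /lz => hj.
case: (ltnP j (ilen it)) => h.
  rewrite -(prednK L0) /= big_cons /= big_seq big1 ?addn0 // => x.
  by rewrite mem_iota; case: x.
rewrite big_seq big1 // => x; rewrite mem_iota; case: x => //.
by rewrite leqn0 eqn0Ngt L0.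
Qed.

Lemma lcolorE it j : j < isz it -> lmass it j + lmass it (lsig it j) = lcolor it.
Proof.
have L0 := ilen_gt0 it.
rewrite /lmass /lsig /lcolor /isz.
case: (ipr it) => /= hj.
  case: (ltnP j (ilen it)) => h.
    by rewrite ifF ?addn0 //; lia.
  by rewrite (ltn_pmod _ L0).
by rewrite hj (ltn_pmod _ L0).
Qed.

Fixpoint gmap (f : item -> nat -> nat) (its : seq item) (x : nat) : nat :=
  match its with
  | [::] => x
  | it :: rs => if x < isz it then f it x else isz it + gmap f rs (x - isz it)
  end.

Fixpoint ginfo (f : item -> nat -> nat) (its : seq item) (x : nat) : nat :=
  match its with
  | [::] => 0
  | it :: rs => if x < isz it then f it x else ginfo f rs (x - isz it)
  end.

Definition total (its : seq item) := \sum_(it <- its) isz it.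

Lemma total_cons it rs : total (it :: rs) = isz it + total rs.
Proof. by rewrite /total big_cons. Qed.

Definition lbound (f : item -> nat -> nat) := forall it j, j < isz it -> f it j < isz it.

Lemma gmap_lt f its x : lbound f -> x < total its -> gmap f its x < total its.
Proof.
move=> hf; elim: its x => [|it rs IH] x //=; rewrite total_cons => hx.
case: (ltnP x (isz it)) => h; first by have := hf it x h; lia.
have := IH (x - isz it); lia.
Qed.

Lemma gmap_comp f g its x : lbound g -> x < total its ->
  gmap f its (gmap g its x) = gmap (fun it j => f it (g it j)) its x.
Proof.
move=> hg; elim: its x => [|it rs IH] x //=; rewrite total_cons => hx.
case: (ltnP x (isz it)) => h; first by rewrite (hg it x h).
rewrite ifF; last lia.
by rewrite addKn IH //; lia.
Qed.

Lemma ginfo_comp f g its x : lbound g -> x < total its ->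
  ginfo f its (gmap g its x) = ginfo (fun it j => f it (g it j)) its x.
Proof.
move=> hg; elim: its x => [|it rs IH] x //=; rewrite total_cons => hx.
case: (ltnP x (isz it)) => h; first by rewrite (hg it x h).
rewrite ifF; last lia.
by rewrite addKn IH //; lia.
Qed.

Lemma gmap_eq f g its x : (forall it j, j < isz it -> f it j = g it j) ->
  gmap f its x = gmap g its x.
Proof.
move=> e; elim: its x => [|it rs IH] x //=.
by case: (ltnP x (isz it)) => h; rewrite ?e ?IH.
Qed.

Lemma ginfo_eq f g its x : (forall it j, j < isz it -> f it j = g it j) ->
  ginfo f its x = ginfo g its x.
Proof.
move=> e; elim: its x => [|it rs IH] x //=.
by case: (ltnP x (isz it)) => h; rewrite ?e ?IH.
Qed.

Lemma gmap_id its x : gmap (fun _ j => j) its x = x.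
Proof.
elim: its x => [|it rs IH] x //=.
case: (ltnP x (isz it)) => h //; rewrite IH; lia.
Qed.

Lemma gmap_inj f its x y : lbound f ->
  (forall it j j', j < isz it -> j' < isz it -> f it j = f it j' -> j = j') ->
  x < total its -> y < total its -> gmap f its x = gmap f its y -> x = y.
Proof.
move=> hf hi; elim: its x y => [|it rs IH] x y; first by rewrite /total big_nil.
rewrite /= total_cons => hx hy.
case: (ltnP x (isz it)) => h1; case: (ltnP y (isz it)) => h2.
- exact: hi.
- by have := hf it x h1; lia.
- by have := hf it y h2; lia.
- move=> e; have : x - isz it = y - isz it by apply: IH; lia.
  lia.
Qed.

Lemma gorbit (fam : nat -> item -> nat -> nat) (key : item -> nat -> nat) its x y :
  (forall i, lbound (fam i)) -> lbound key ->
  (forall it j j', j < isz it -> j' < isz it ->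
     (exists i, j' = fam i it j) <-> key it j' = key it j) ->
  x < total its -> y < total its ->
  (exists i, y = gmap (fam i) its x) <-> gmap key its y = gmap key its x.
Proof.
move=> hf hk hl; elim: its x y => [|it rs IH] x y; first by rewrite /total big_nil.
rewrite /= total_cons => hx hy.
case: (ltnP x (isz it)) => h1; case: (ltnP y (isz it)) => h2.
- exact: hl.
- split; first by case=> i e; have := hf i it x h1; lia.
  by have := hk it x h1; lia.
- split; first by case=> i e; have := hf i it y h2; lia.
  by have := hk it y h2; lia.
- have := IH (x - isz it) (y - isz it); rewrite -!/(gmap _ rs _).
  move=> /(_ ltac:(lia) ltac:(lia)) [A B]; split.
    case=> i e; have : gmap key rs (y - isz it) = gmap key rs (x - isz it).
      by apply: A; exists i; lia.
    lia.
  move=> e; have [|i ei] := B; first lia.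
  by exists i; lia.
Qed.

Lemma gblock_sum (key w : item -> nat -> nat) its x : lbound key ->
  x < total its ->
  \sum_(y <- iota 0 (total its) | gmap key its y == gmap key its x) ginfo w its y =
  ginfo (fun it j => \sum_(j' <- iota 0 (isz it) | key it j' == key it j) w it j') its x.
Proof.
move=> hk; elim: its x => [|it rs IH] x; first by rewrite /total big_nil.
rewrite /= total_cons => hx.
have I : iota (isz it) (total rs) = map (addn (isz it)) (iota 0 (total rs)) by rewrite -iotaDl addn0.
rewrite iotaD big_cat /= add0n I big_map.
have E1 : \sum_(i <- iota 0 (isz it) | gmap key (it :: rs) i == gmap key (it :: rs) x)
            ginfo w (it :: rs) i =
          \sum_(i <- iota 0 (isz it) | key it i == gmap key (it :: rs) x) w it i.
  rewrite big_seq_cond [RHS]big_seq_cond.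
  apply: eq_big => [i|i /andP [hi _]].
    by rewrite mem_iota /= add0n; case: (ltnP i (isz it)) => hi //=.
  by move: hi; rewrite mem_iota /= add0n => ->.
have E2 : \sum_(i <- iota 0 (total rs) | gmap key (it :: rs) (isz it + i) == gmap key (it :: rs) x)
            ginfo w (it :: rs) (isz it + i) =
          \sum_(i <- iota 0 (total rs) | isz it + gmap key rs i == gmap key (it :: rs) x)
            ginfo w rs i.
  rewrite /=; apply: eq_big => [i|i _]; (have -> : (isz it + i < isz it) = false by lia); by rewrite addKn.
rewrite E1 E2 /=; case: (ltnP x (isz it)) => h.
  have Z : \sum_(i <- iota 0 (total rs) | isz it + gmap key rs i == key it x) ginfo w rs i = 0.
    rewrite big_seq_cond big1 // => i /andP [_ /eqP e].
    by have := hk it x h; lia.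
  by rewrite Z addn0.
have Z : \sum_(i <- iota 0 (isz it) | key it i == isz it + gmap key rs (x - isz it)) w it i = 0.
  rewrite big_seq_cond big1 // => i /andP [hi /eqP e].
  by move: hi; rewrite mem_iota add0n /= => hi; have := hk it i hi; lia.
rewrite Z add0n -IH; last lia.
by apply: eq_bigl => i; rewrite eqn_add2l.
Qed.

Lemma gcount (P : nat -> nat -> bool) f g its :
  count (fun y => P (ginfo f its y) (ginfo g its y)) (iota 0 (total its)) =
  \sum_(it <- its) count (fun j => P (f it j) (g it j)) (iota 0 (isz it)).
Proof.
elim: its => [|it rs IH]; first by rewrite /total !big_nil.
have I : iota (isz it) (total rs) = map (addn (isz it)) (iota 0 (total rs)) by rewrite -iotaDl addn0.
rewrite total_cons big_cons iotaD count_cat add0n I count_map -IH.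
congr (_ + _).
  by apply: eq_in_count => i; rewrite mem_iota /= add0n => ->.
by apply: eq_count => i /=; (have -> : (isz it + i < isz it) = false by lia); rewrite addKn.
Qed.

Lemma ginfoD f g its x : ginfo f its x + ginfo g its x = ginfo (fun it j => f it j + g it j) its x.
Proof. by elim: its x => [|it rs IH] x //=; case: ifP. Qed.

Lemma ginfo_const c its x : x < total its -> ginfo (fun _ _ => c) its x = c.
Proof.
elim: its x => [|it rs IH] x; first by rewrite /total big_nil.
rewrite /= total_cons => hx; case: ifP => // h; apply: IH; lia.
Qed.

Lemma count_orbits (T : finType) (g : {perm T}) (Q : pred {set T}) :
  #|[set x | Q (porbit g x)]| = \sum_(C in porbits g | Q C) #|C|.
Proof.
rewrite -sum1_card (partition_big (porbit g) (fun C => (C \in porbits g) && Q C)); last first.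
  by move=> x; rewrite inE => qx; rewrite imset_f.
apply: eq_bigr => C /andP [/imsetP [y _ ->] QC].
rewrite -sum1_card; apply: eq_bigl => x.
rewrite inE eq_porbit_mem; case E: (x \in porbit g y); rewrite ?andbF ?andbT //.
by move: E; rewrite -eq_porbit_mem => /eqP ->.
Qed.

Lemma mult_count r n (p : gelt r n) (t : 'I_r) l :
  l * cycle_mult p t l =
  #|[set x | (#|porbit p.2 x| == l) && (cycle_color p (porbit p.2 x) == t)]|.
Proof.
rewrite (count_orbits p.2 (fun C => (#|C| == l) && (cycle_color p C == t))).
rewrite /cycle_mult -sum1_card big_distrr /= muln1 big_mkcond /= [RHS]big_mkcond /=.
apply: eq_bigr => C _; rewrite inE; case: (C \in porbits p.2) => //=.
by case: eqP => //= ->; case: eqP.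
Qed.

Lemma sum_set n (Pn : pred nat) (F : nat -> nat) :
  \sum_(u in [set u : 'I_n | Pn (val u)]) F (val u) = \sum_(y <- iota 0 n | Pn y) F y.
Proof.
have -> : iota 0 n = index_iota 0 n by rewrite /index_iota subn0.
rewrite big_mkord; apply: eq_bigl => u; by rewrite inE.
Qed.

Lemma card_set n (Pn : pred nat) : #|[set u : 'I_n | Pn (val u)]| = count Pn (iota 0 n).
Proof. by rewrite -sum1_card (@sum_set n Pn (fun _ => 1)) sum1_count. Qed.

Definition ordf n (f : nat -> nat) (x : 'I_n) : 'I_n := insubd x (f (val x)).

Lemma ordfE n (f : nat -> nat) (x : 'I_n) : f (val x) < n -> val (ordf f x) = f (val x).
Proof. by move=> h; rewrite /ordf val_insubd h. Qed.

Section Build.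
Variables (r n : nat) (its : seq item).
Hypotheses (r0 : 0 < r) (Htot : total its = n).

Local Notation gsig := (gmap lsig its).
Local Notation gtau := (gmap ltau its).

Lemma gsig_lt x : x < n -> gsig x < n.
Proof. by rewrite -Htot => hx; apply: gmap_lt => //; exact: lsig_lt. Qed.

Lemma gsigK x : x < n -> gsig (gsig x) = gtau x.
Proof.
move=> hx; rewrite gmap_comp; [|exact: lsig_lt|by rewrite Htot].
by apply: gmap_eq => it j hj; rewrite lsigK.
Qed.

Lemma sig_inj : injective (@ordf n gsig).
Proof.
move=> x y /(congr1 val); rewrite !ordfE ?gsig_lt ?ltn_ord // => /(congr1 gsig).
rewrite !gsigK ?ltn_ord // => e; apply: val_inj.
apply: (gmap_inj (f := ltau) (its := its)) => //; rewrite ?Htot //.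
- exact: ltau_lt.
- exact: ltau_inj.
- exact: ltn_ord.
- exact: ltn_ord.
Qed.

Definition sigma : {perm 'I_n} := perm sig_inj.

Lemma sigmaE x : val (sigma x) = gsig (val x).
Proof. by rewrite /sigma permE ordfE ?gsig_lt ?ltn_ord. Qed.

Lemma tauX i x : val (((sigma * sigma) ^+ i)%g x) = gmap (liter i) its (val x).
Proof.
elim: i => [|i IH].
  rewrite expg0 perm1 -{1}(gmap_id its (val x)).
  by apply: gmap_eq => it j hj; rewrite liter0.
rewrite expgSr permM permM !sigmaE IH.
have hx : val x < total its by rewrite Htot ltn_ord.
have hl0 : gmap (liter i) its x < total its by apply: gmap_lt => //; exact: liter_lt.
have hl : gmap (liter i) its x < n := leq_trans hl0 (eq_leq Htot).
rewrite gsigK // gmap_comp //; last exact: liter_lt.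
by apply: gmap_eq => it j hj; rewrite ltau_liter liter_add addn1.
Qed.

Definition zfun : {ffun 'I_n -> 'I_r} :=
  [ffun u => Ordinal (ltn_pmod (ginfo lz its (val u)) r0)].
Definition pi0 : gelt r n := (zfun, sigma).

Lemma iotaT : iota 0 n = iota 0 (total its).
Proof. by rewrite Htot. Qed.

Lemma porbitE x : porbit (sigma * sigma)%g x =
  [set y : 'I_n | gmap lkey its (val y) == gmap lkey its (val x)].
Proof.
apply/setP => y; rewrite inE.
have hx : val x < total its by rewrite Htot ltn_ord.
have hy : val y < total its by rewrite Htot ltn_ord.
have G := gorbit (fam := fun i => liter i) (key := lkey) (its := its) (x := val x) (y := val y)
  (fun i => @liter_lt i) lkey_lt lkey_orbit hx hy.
apply/porbitP/eqP.
  by case=> i e; apply/G; exists i; rewrite e tauX.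
by move/G => [i e]; exists i; apply: val_inj; rewrite tauX.
Qed.

Lemma card_porbit x : #|porbit (sigma * sigma)%g x| = ginfo (fun it _ => ilen it) its (val x).
Proof.
have hx : val x < total its by rewrite Htot ltn_ord.
rewrite porbitE (@card_set n (fun z => gmap lkey its z == gmap lkey its (val x))) -sum1_count iotaT.
rewrite big_seq_cond (eq_bigr (fun y => ginfo (fun _ _ => 1) its y)); last first.
  by move=> y /andP [hy _]; rewrite ginfo_const //; move: hy; rewrite mem_iota.
rewrite -big_seq_cond gblock_sum //; last exact: lkey_lt.
apply: ginfo_eq => it j hj.
by rewrite lblock_sum // sum1_size size_iota.
Qed.

Lemma sum_porbit x : \sum_(u in porbit (sigma * sigma)%g x) ginfo lz its (val u) =
  ginfo lmass its (val x).
Proof.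
have hx : val x < total its by rewrite Htot ltn_ord.
rewrite porbitE (@sum_set n (fun y => gmap lkey its y == gmap lkey its x) (ginfo lz its)).
rewrite iotaT gblock_sum //; last exact: lkey_lt.
apply: ginfo_eq => it j hj.
by rewrite lblock_sum // lz_block.
Qed.

Lemma color_porbit x : cycle_color (gmul pi0 pi0) (porbit (sigma * sigma)%g x) =
  ginfo (fun it _ => lcolor it) its (val x) %% r.
Proof.
have hx : val x < total its by rewrite Htot ltn_ord.
rewrite (colorK pi0 x) /Zs /=.
rewrite (eq_bigr (fun u => ginfo lz its (val u) %% r)); last by move=> u _; rewrite ffunE.
rewrite [X in _ + X](eq_bigr (fun u => ginfo lz its (val u) %% r)); last by move=> u _; rewrite ffunE.
rewrite -modnDm !modn_summ modnDm !sum_porbit sigmaE ginfo_comp //; last exact: lsig_lt.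
rewrite ginfoD; congr (_ %% r); apply: ginfo_eq => it j hj.
exact: lcolorE.
Qed.

Lemma count_const (T : Type) (b : bool) (s : seq T) : count (fun _ => b) s = b * size s.
Proof. by case: b; rewrite ?count_predT ?count_pred0 ?mul1n. Qed.

Lemma build_mult (t : 'I_r) l :
  l * cycle_mult (gmul pi0 pi0) t l =
  \sum_(it <- its) ((ilen it == l) && (lcolor it %% r == t)) * isz it.
Proof.
rewrite mult_count /=.
rewrite (eq_finset (fun x => (ginfo (fun it _ => ilen it) its (val x) == l) &&
    (ginfo (fun it _ => lcolor it) its (val x) %% r == t))); last first.
  by move=> x; rewrite card_porbit color_porbit.
rewrite (@card_set n (fun y => (ginfo (fun it _ => ilen it) its y == l) &&
    (ginfo (fun it _ => lcolor it) its y %% r == t))).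
rewrite iotaT (gcount (fun a b => (a == l) && (b %% r == t))).
by apply: eq_bigr => it _; rewrite count_const size_iota.
Qed.

End Build.

Definition halfc r (t : nat) := if odd r then (t * (r.+1)./2) %% r else t./2.

Definition gen r (s : seq nat) (t : nat) (l : nat) : seq item :=
  if odd l && (odd r || ~~ odd t) then nseq (count_mem l s) (false, l./2, halfc r t)
  else nseq (count_mem l s)./2 (true, l.-1, t).

Definition build r (lam : 'I_r -> seq nat) : seq item :=
  flatten [seq flatten [seq gen r (lam t) t l | l <- undup (lam t)] | t <- index_enum 'I_r].

Lemma half_ok r t : 0 < r -> t < r -> (odd r || ~~ odd t) -> (halfc r t + halfc r t) %% r = t.
Proof.
move=> r0 tr; rewrite /halfc; case: ifP => or /= ht.
  rewrite modnDm addnn doubleMr.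
  have -> : (r.+1)./2.*2 = r.+1 by rewrite -[in RHS](odd_double_half r.+1) /= or.
  by rewrite mulnS addnC modnMDl modn_small.
have e : t./2.*2 = t by rewrite -[in RHS](odd_double_half t) (negbTE ht).
by rewrite addnn e modn_small.
Qed.

Lemma sum_gen r s (t : nat) l (F : nat -> nat -> nat) : 0 < r -> t < r -> 0 < l ->
  (~~ (odd l && (odd r || ~~ odd t)) -> ~~ odd (count_mem l s)) ->
  \sum_(it <- gen r s t l) F (ilen it) (lcolor it %% r) * isz it = count_mem l s * (F l t * l).
Proof.
move=> r0 tr l0 hp; rewrite /gen; case: ifP => c.
  rewrite big_nseq iter_addn_0 mulnC.
  case/andP: c => ol c.
  have e : (l./2).*2.+1 = l by rewrite -[in RHS](odd_double_half l) ol.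
  by rewrite /isz /ilen /lcolor /ipr /ic /= e half_ok.
rewrite big_nseq iter_addn_0.
have := hp (negbT c) => /negbTE om.
have e : (count_mem l s)./2.*2 = count_mem l s by rewrite -[in RHS](odd_double_half (count_mem l s)) om.
rewrite /isz /ilen /lcolor /ipr /ic /= prednK // (modn_small tr) -[in RHS]e.
set a := F l t; set h := (count_mem l s)./2.
rewrite -muln2; nia.
Qed.

Lemma sum_undup (s : seq nat) (G : nat -> nat) :
  \sum_(l <- undup s) count_mem l s * G l = \sum_(l <- s) G l.
Proof.
rewrite -(big_undup_iterop_count _ s xpredT G).
apply: eq_bigr => l _; rewrite Monoid.iteropE iter_addn_0 mulnC //.
Qed.

Lemma build_sum r (lam : 'I_r -> seq nat) (F : nat -> nat -> nat) : 0 < r ->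
  (forall t, all (fun x => 0 < x) (lam t)) ->
  (forall (t : 'I_r) l, ~~ (odd l && (odd r || ~~ odd t)) -> ~~ odd (count_mem l (lam t))) ->
  \sum_(it <- build lam) F (ilen it) (lcolor it %% r) * isz it =
  \sum_(t < r) \sum_(l <- lam t) F l t * l.
Proof.
move=> r0 hpos hpar; rewrite /build big_flatten big_map /=.
apply: eq_bigr => t _; rewrite big_flatten big_map /= -[RHS]sum_undup.
rewrite [LHS]big_seq [RHS]big_seq; apply: eq_bigr => l; rewrite mem_undup => hl.
apply: sum_gen => //; last exact: hpar.
by have := hpos t => /allP /(_ l hl).
Qed.

Theorem proposition6p3 (r n : nat) (lam : 'I_r -> seq nat) :
  (0 < r)%N -> is_rpartition n lam ->
  ((exists pi : gelt r n, has_cycle_type (gmul pi pi) lam) <->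
   ((forall (t : 'I_r) (l : nat), ~~ odd l -> ~~ odd (count_mem l (lam t))) /\
    (~~ odd r -> forall (t : 'I_r) (l : nat), odd t -> odd l ->
        ~~ odd (count_mem l (lam t))))).
Proof.
move=> r0 [hpart hsum]; split.
  case=> pi hct; split.
    by move=> t l hl; rewrite hct; apply: nec; left.
  by move=> er t l ot ol; rewrite hct; apply: nec; right.
case=> H1 H2.
have hpos t : all (fun x => 0 < x) (lam t) by case/andP: (hpart t).
have hpar : forall (t : 'I_r) l, ~~ (odd l && (odd r || ~~ odd t)) -> ~~ odd (count_mem l (lam t)).
  move=> t l; case: (boolP (odd l)) => ol /=; last by move=> _; apply: H1.
  by rewrite negb_or negbK => /andP [er ot]; apply: H2.
have Htot : total (build lam) = n.
  transitivity (\sum_(it <- build lam) (fun _ _ => 1) (ilen it) (lcolor it %% r) * isz it).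
    by rewrite /total; apply: eq_bigr => it _; rewrite mul1n.
  rewrite (build_sum (fun _ _ => 1)) // -hsum; apply: eq_bigr => t _.
  by rewrite sumnE; apply: eq_bigr => l _; rewrite mul1n.
exists (pi0 r0 Htot) => t l.
case: (posnP l) => [->|lpos].
  have -> : count_mem 0 (lam t) = 0.
    apply/count_memPn; apply/negP => h0.
    by have := hpos t => /allP /(_ 0 h0).
  apply/esym/eqP; rewrite cards_eq0; apply/eqP/setP => C; rewrite !inE.
  apply/negP => /andP [/imsetP [x _ ->] /andP [h _]].
  by move: h; rewrite (negbTE (card_porbit_neq0 _ _)).
apply/eqP; rewrite -(eqn_pmul2l lpos) build_mult.
rewrite (build_sum (fun a b => (a == l) && (b == t))) //.
rewrite (bigD1 t) //= [X in _ + X]big1 ?addn0; last first.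
  move=> t' ne; rewrite big1 // => l' _.
  have -> : (val t' == val t) = false by apply/negbTE; exact: ne.
  by rewrite andbF.
apply/eqP; under eq_bigr do rewrite eqxx andbT.
elim: (lam t) => [|a s IH]; first by rewrite big_nil muln0.
rewrite big_cons /= -IH; case: eqP => [->|_] /=; nia.
Qed.
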